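(* Let $F$ be an imaginary cyclic sextic field with cubic subfield $K$ of conductor $p$. If there exists $f\in O_K\setminus\mathbb{Z}$ with $\|f\|^2<22$, then $p\in\{7,9,13\}$.
   Context: $F$ is a totally imaginary number field Galois over $\mathbb{Q}$ with cyclic Galois group $\langle\tau\rangle$ of order 6; $K$ is its maximal real (cyclic cubic) subfield, with ring of integers $O_K$. With the embeddings $\tau_1=\mathrm{id},\tau_2=\tau,\tau_3=\tau^2$, $\|f\|^2=2\sum_{i=1}^3|\tau_i(f)|^2$. *)

(* Defs.v *)
From HB Require Import structures.
From mathcomp Require Import all_boot all_order all_algebra all_fingroup all_solvable all_field.
Set Implicit Arguments. Unset Strict Implicit. Unset Printing Implicit Defensive.
Import Order.TTheory GRing.Theory Num.Theory.
Local Open Scope ring_scope.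

Definition totally_imaginary (L : fieldExtType rat) : Prop :=
  forall iota : {rmorphism L -> algC}, exists x : L, iota x \notin Num.real.

Definition in_cyclotomic (S : algC -> Prop) (n : nat) : Prop :=
  exists z : algC, n.-primitive_root z /\
    forall x, S x -> exists q : {poly rat}, x = (map_poly ratr q).[z].

(* Conductor of an abelian number field (given by its image S in C):
   the least n >= 1 with S contained in Q(zeta_n) (Kronecker-Weber). *)
Definition is_conductor (S : algC -> Prop) (p : nat) : Prop :=
  (0 < p)%N /\ in_cyclotomic S p /\
  forall n, (0 < n)%N -> in_cyclotomic S n -> (p <= n)%N.

(* Image in C of the maximal real subfield {x in L | iota x real}. *)
Definition real_image (L : fieldExtType rat) (iota : {rmorphism L -> algC}) : algC -> Prop :=
  fun y => exists x : L, iota x \is Num.real /\ y = iota x.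

(* Main.v *)
Require Import Defs.
From HB Require Import structures.
From mathcomp Require Import all_boot all_order all_algebra all_fingroup all_solvable all_field.
From Stdlib Require Import ZArith Lia.
From Stdlib Require Lists.List.
From mathcomp Require Import ssrZ zify ring.
Import Order.TTheory GRing.Theory Num.Theory.
Delimit Scope nat_scope with N.
Local Open Scope ring_scope.

Module EZ.
Local Open Scope Z_scope.

Definition zrange (a : Z) (n : nat) : list Z := List.map (fun i => a + Z.of_nat i) (List.seq 0 n).

Lemma in_zrange a n x : a <= x < a + Z.of_nat n -> List.In x (zrange a n).
Proof.
  intros H. unfold zrange. apply List.in_map_iff. exists (Z.to_nat (x - a)).
  split; [lia|]. apply List.in_seq. lia.
Qed.

Definition discZ s1 s2 s3 := 18*s1*s2*s3 - 4*s1^3*s3 + s1^2*s2^2 - 4*s2^3 - 27*s3^2.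
Definition cubZ s1 s2 s3 r := r^3 - s1*r^2 + s2*r - s3.

Definition goodL : list (Z*Z*Z) :=
 (-4, 3, 1)::(-3, 0, 1)::(-3, 0, 3)::(-2, -3, 5)::(-2, -1, 1)::(-1, -4, -1)::(-1, -2, 1)::(0, -3, -1)::(0, -3, 1)::(1, -4, 1)::(1, -2, -1)::(2, -3, -5)::(2, -1, -1)::(3, 0, -3)::(3, 0, -1)::(4, 3, -1)::nil.

Definition eqt (u t : Z*Z*Z) : bool := let '(a,b,c) := u in let '(x,y,z) := t in (a =? x)%Z && (b =? y)%Z && (c =? z)%Z.

Definition inL (t : Z*Z*Z) : bool := List.existsb (fun u => eqt u t) goodL.

Lemma inL_In t : inL t = true -> List.In t goodL.
Proof.
  unfold inL. intros H. apply List.existsb_exists in H. destruct H as [u [Hu Ht]].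
  destruct u as [[a b] c], t as [[x y] z]. simpl in Ht.
  apply andb_prop in Ht as [Ht H3]. apply andb_prop in Ht as [H1 H2].
  apply Z.eqb_eq in H1, H2, H3. subst. exact Hu.
Qed.

Definition condZ s1 s2 s3 : bool :=
  (s1^2 - 2*s2 <=? 10) && (3*s2 <=? s1^2) &&
  (let D := discZ s1 s2 s3 in (0 <? D) && (Z.sqrt D * Z.sqrt D =? D)) &&
  List.forallb (fun r => negb (cubZ s1 s2 s3 r =? 0)) (zrange (-31) 63).

Definition checkZ : bool :=
  List.forallb (fun s1 => List.forallb (fun s2 => List.forallb (fun s3 =>
     implb (condZ s1 s2 s3) (inL (s1,s2,s3))) (zrange (-31) 63)) (zrange (-5) 16)) (zrange (-5) 11).

Lemma checkZ_ok : checkZ = true.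
Proof. vm_compute. reflexivity. Qed.

Lemma enumZ s1 s2 s3 d :
  s1^2 - 2*s2 <= 10 -> 3*s2 <= s1^2 -> s3^2 <= 1000 ->
  d*d = discZ s1 s2 s3 -> d <> 0 ->
  (forall r, cubZ s1 s2 s3 r <> 0) ->
  List.In (s1,s2,s3) goodL.
Proof.
  intros h1 h2 h3 h4 h5 h6. apply inL_In.
  rewrite !Z.pow_2_r in h1 h2 h3.
  assert (q1 : s1*s1 <= 30) by lia.
  assert (b1 : -5 <= s1 <= 5).
  { destruct (Z_le_gt_dec s1 5); destruct (Z_le_gt_dec (-5) s1); nia. }
  assert (q2 : 0 <= s1*s1) by nia.
  assert (b2 : -5 <= s2 <= 10) by lia.
  assert (b3 : -31 <= s3 <= 31).
  { destruct (Z_le_gt_dec s3 31); destruct (Z_le_gt_dec (-31) s3); nia. }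
  pose proof checkZ_ok as C. unfold checkZ in C.
  assert (i1 : List.In s1 (zrange (-5) 11)) by (apply in_zrange; cbn; lia).
  assert (i2 : List.In s2 (zrange (-5) 16)) by (apply in_zrange; cbn; lia).
  assert (i3 : List.In s3 (zrange (-31) 63)) by (apply in_zrange; cbn; lia).
  rewrite List.forallb_forall in C. specialize (C s1 i1).
  rewrite List.forallb_forall in C. specialize (C s2 i2).
  rewrite List.forallb_forall in C. specialize (C s3 i3).
  assert (Hc : condZ s1 s2 s3 = true); [|rewrite Hc in C; exact C].
  unfold condZ.
  assert (E : Z.sqrt (discZ s1 s2 s3) = Z.abs d).
  { rewrite -h4. replace (d*d) with (Z.abs d * Z.abs d) by lia. apply Z.sqrt_square. lia. }
  rewrite E -h4.
  apply andb_true_intro; split.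
  { rewrite !Z.pow_2_r.
    repeat (apply andb_true_intro; split); try (apply Z.leb_le; lia); try (apply Z.ltb_lt; nia);
    try (apply Z.eqb_eq; nia). }
  apply List.forallb_forall. intros r _. apply Bool.negb_true_iff. apply Z.eqb_neq. apply h6.
Qed.
End EZ.
Definition inQz (z x : algC) : Prop := exists q : {poly rat}, x = (map_poly ratr q).[z].

Lemma inQz_z z : inQz z z.
Proof. by exists 'X; rewrite map_polyX hornerX. Qed.

Lemma inQz_rat z (r : rat) : inQz z (ratr r).
Proof. by exists r%:P; rewrite map_polyC hornerC. Qed.

Lemma inQz_int z (r : int) : inQz z (r%:~R).
Proof. by have := inQz_rat z (r%:~R); rewrite rmorph_int. Qed.

Lemma inQz_add z x y : inQz z x -> inQz z y -> inQz z (x + y).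
Proof. by move=> [p ->] [q ->]; exists (p + q); rewrite rmorphD hornerD. Qed.

Lemma inQz_mul z x y : inQz z x -> inQz z y -> inQz z (x * y).
Proof. by move=> [p ->] [q ->]; exists (p * q); rewrite rmorphM hornerM. Qed.

Lemma inQz_opp z x : inQz z x -> inQz z (- x).
Proof. by move=> [p ->]; exists (- p); rewrite rmorphN hornerN. Qed.

Lemma inQz_comp z a (h : {poly rat}) : inQz z a -> inQz z (map_poly ratr h).[a].
Proof.
move=> [g ->]; exists (h \Po g).
by rewrite map_comp_poly horner_comp.
Qed.

Lemma inQz_exp z x n : inQz z x -> inQz z (x ^+ n).
Proof. by move=> hx; elim: n => [|n IH]; [rewrite expr0; exact: (inQz_int z 1) | rewrite exprS; apply: inQz_mul]. Qed.

Lemma base7 (y : algC) : y^+3 - (- 1%:~R) * y^+2 + (- 2%:~R) * y - (1%:~R) = 0 ->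
  exists z, 7.-primitive_root z /\ inQz z y.
Proof.
move=> Hy.
have [z pz] := @C_prim_root_exists 7 isT.
exists z; split => //.
have zm : z ^+ 7 = 1 by apply: prim_expr_order.
have z1 : z - 1 != 0 by rewrite subr_eq0 -(prim_order_dvd pz 1).
have Phi : (1 + z + z^+2 + z^+3 + z^+4 + z^+5 + z^+6) = 0.
  apply/eqP; have : (z - 1) * (1 + z + z^+2 + z^+3 + z^+4 + z^+5 + z^+6) = 0.
    by transitivity (z^+7 - 1); [ring | rewrite zm subrr].
  by move/eqP; rewrite mulf_eq0 (negbTE z1).
have e1 : (z + z^+6) + (z^+2 + z^+5) + (z^+3 + z^+4) = (- 1%:~R).
  apply/eqP; rewrite -subr_eq0; apply/eqP.
  by transitivity ((1 + z + z^+2 + z^+3 + z^+4 + z^+5 + z^+6) * (1)); [ring | rewrite Phi mul0r].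
have e2 : (z + z^+6) * (z^+2 + z^+5) + (z + z^+6) * (z^+3 + z^+4) + (z^+2 + z^+5) * (z^+3 + z^+4) = (- 2%:~R).
  apply/eqP; rewrite -subr_eq0; apply/eqP.
  by transitivity ((1 + z + z^+2 + z^+3 + z^+4 + z^+5 + z^+6) * (2%:~R - 2%:~R * z + z^+3 + z^+5)); [ring | rewrite Phi mul0r].
have e3 : (z + z^+6) * (z^+2 + z^+5) * (z^+3 + z^+4) = (1%:~R).
  apply/eqP; rewrite -subr_eq0; apply/eqP.
  by transitivity ((1 + z + z^+2 + z^+3 + z^+4 + z^+5 + z^+6) * (- 1 + z + z^+6 - z^+7 + z^+9)); [ring | rewrite Phi mul0r].
have : (y - (z + z^+6)) * (y - (z^+2 + z^+5)) * (y - (z^+3 + z^+4)) = 0.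
  transitivity (y^+3 - ((z + z^+6) + (z^+2 + z^+5) + (z^+3 + z^+4)) * y^+2 + ((z + z^+6) * (z^+2 + z^+5) + (z + z^+6) * (z^+3 + z^+4) + (z^+2 + z^+5) * (z^+3 + z^+4)) * y - ((z + z^+6) * (z^+2 + z^+5) * (z^+3 + z^+4))); first by ring.
  by rewrite e1 e2 e3.
have hz := inQz_z z.
have hy1 : inQz z (z + z^+6) by repeat first [apply: inQz_add | apply: inQz_opp | apply: inQz_mul | apply: inQz_exp | apply: inQz_int | exact: hz].
have hy2 : inQz z (z^+2 + z^+5) by repeat first [apply: inQz_add | apply: inQz_opp | apply: inQz_mul | apply: inQz_exp | apply: inQz_int | exact: hz].
have hy3 : inQz z (z^+3 + z^+4) by repeat first [apply: inQz_add | apply: inQz_opp | apply: inQz_mul | apply: inQz_exp | apply: inQz_int | exact: hz].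
by move/eqP; rewrite !mulf_eq0 !subr_eq0 => /orP[/orP[]|] /eqP ->.
Qed.

Lemma base9 (y : algC) : y^+3 - (0%:~R) * y^+2 + (- 3%:~R) * y - (- 1%:~R) = 0 ->
  exists z, 9.-primitive_root z /\ inQz z y.
Proof.
move=> Hy.
have [z pz] := @C_prim_root_exists 9 isT.
exists z; split => //.
have zm : z ^+ 9 = 1 by apply: prim_expr_order.
have z1 : z^+3 - 1 != 0 by rewrite subr_eq0 -(prim_order_dvd pz 3).
have Phi : (1 + z^+3 + z^+6) = 0.
  apply/eqP; have : (z^+3 - 1) * (1 + z^+3 + z^+6) = 0.
    by transitivity (z^+9 - 1); [ring | rewrite zm subrr].
  by move/eqP; rewrite mulf_eq0 (negbTE z1).
have e1 : (z + z^+8) + (z^+2 + z^+7) + (z^+4 + z^+5) = (0%:~R).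
  apply/eqP; rewrite -subr_eq0; apply/eqP.
  by transitivity ((1 + z^+3 + z^+6) * (z + z^+2)); [ring | rewrite Phi mul0r].
have e2 : (z + z^+8) * (z^+2 + z^+7) + (z + z^+8) * (z^+4 + z^+5) + (z^+2 + z^+7) * (z^+4 + z^+5) = (- 3%:~R).
  apply/eqP; rewrite -subr_eq0; apply/eqP.
  by transitivity ((1 + z^+3 + z^+6) * (3%:~R - 2%:~R * z^+3 + z^+5 + z^+6 + z^+7 + z^+9)); [ring | rewrite Phi mul0r].
have e3 : (z + z^+8) * (z^+2 + z^+7) * (z^+4 + z^+5) = (- 1%:~R).
  apply/eqP; rewrite -subr_eq0; apply/eqP.
  by transitivity ((1 + z^+3 + z^+6) * (1 - z^+3 + z^+7 + z^+8 + z^+9 - z^+10 - z^+11 + z^+13 + z^+14)); [ring | rewrite Phi mul0r].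
have : (y - (z + z^+8)) * (y - (z^+2 + z^+7)) * (y - (z^+4 + z^+5)) = 0.
  transitivity (y^+3 - ((z + z^+8) + (z^+2 + z^+7) + (z^+4 + z^+5)) * y^+2 + ((z + z^+8) * (z^+2 + z^+7) + (z + z^+8) * (z^+4 + z^+5) + (z^+2 + z^+7) * (z^+4 + z^+5)) * y - ((z + z^+8) * (z^+2 + z^+7) * (z^+4 + z^+5))); first by ring.
  by rewrite e1 e2 e3.
have hz := inQz_z z.
have hy1 : inQz z (z + z^+8) by repeat first [apply: inQz_add | apply: inQz_opp | apply: inQz_mul | apply: inQz_exp | apply: inQz_int | exact: hz].
have hy2 : inQz z (z^+2 + z^+7) by repeat first [apply: inQz_add | apply: inQz_opp | apply: inQz_mul | apply: inQz_exp | apply: inQz_int | exact: hz].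
have hy3 : inQz z (z^+4 + z^+5) by repeat first [apply: inQz_add | apply: inQz_opp | apply: inQz_mul | apply: inQz_exp | apply: inQz_int | exact: hz].
by move/eqP; rewrite !mulf_eq0 !subr_eq0 => /orP[/orP[]|] /eqP ->.
Qed.

Lemma base13 (y : algC) : y^+3 - (- 1%:~R) * y^+2 + (- 4%:~R) * y - (- 1%:~R) = 0 ->
  exists z, 13.-primitive_root z /\ inQz z y.
Proof.
move=> Hy.
have [z pz] := @C_prim_root_exists 13 isT.
exists z; split => //.
have zm : z ^+ 13 = 1 by apply: prim_expr_order.
have z1 : z - 1 != 0 by rewrite subr_eq0 -(prim_order_dvd pz 1).
have Phi : (1 + z + z^+2 + z^+3 + z^+4 + z^+5 + z^+6 + z^+7 + z^+8 + z^+9 + z^+10 + z^+11 + z^+12) = 0.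
  apply/eqP; have : (z - 1) * (1 + z + z^+2 + z^+3 + z^+4 + z^+5 + z^+6 + z^+7 + z^+8 + z^+9 + z^+10 + z^+11 + z^+12) = 0.
    by transitivity (z^+13 - 1); [ring | rewrite zm subrr].
  by move/eqP; rewrite mulf_eq0 (negbTE z1).
have e1 : (z + z^+5 + z^+8 + z^+12) + (z^+2 + z^+3 + z^+10 + z^+11) + (z^+4 + z^+6 + z^+7 + z^+9) = (- 1%:~R).
  apply/eqP; rewrite -subr_eq0; apply/eqP.
  by transitivity ((1 + z + z^+2 + z^+3 + z^+4 + z^+5 + z^+6 + z^+7 + z^+8 + z^+9 + z^+10 + z^+11 + z^+12) * (1)); [ring | rewrite Phi mul0r].
have e2 : (z + z^+5 + z^+8 + z^+12) * (z^+2 + z^+3 + z^+10 + z^+11) + (z + z^+5 + z^+8 + z^+12) * (z^+4 + z^+6 + z^+7 + z^+9) + (z^+2 + z^+3 + z^+10 + z^+11) * (z^+4 + z^+6 + z^+7 + z^+9) = (- 4%:~R).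
  apply/eqP; rewrite -subr_eq0; apply/eqP.
  by transitivity ((1 + z + z^+2 + z^+3 + z^+4 + z^+5 + z^+6 + z^+7 + z^+8 + z^+9 + z^+10 + z^+11 + z^+12) * (4%:~R - 4%:~R * z + z^+3 + 2%:~R * z^+7 + z^+11)); [ring | rewrite Phi mul0r].
have e3 : (z + z^+5 + z^+8 + z^+12) * (z^+2 + z^+3 + z^+10 + z^+11) * (z^+4 + z^+6 + z^+7 + z^+9) = (- 1%:~R).
  apply/eqP; rewrite -subr_eq0; apply/eqP.
  by transitivity ((1 + z + z^+2 + z^+3 + z^+4 + z^+5 + z^+6 + z^+7 + z^+8 + z^+9 + z^+10 + z^+11 + z^+12) * (1 - z + z^+7 + z^+10 + z^+13 + z^+17 + z^+20)); [ring | rewrite Phi mul0r].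
have : (y - (z + z^+5 + z^+8 + z^+12)) * (y - (z^+2 + z^+3 + z^+10 + z^+11)) * (y - (z^+4 + z^+6 + z^+7 + z^+9)) = 0.
  transitivity (y^+3 - ((z + z^+5 + z^+8 + z^+12) + (z^+2 + z^+3 + z^+10 + z^+11) + (z^+4 + z^+6 + z^+7 + z^+9)) * y^+2 + ((z + z^+5 + z^+8 + z^+12) * (z^+2 + z^+3 + z^+10 + z^+11) + (z + z^+5 + z^+8 + z^+12) * (z^+4 + z^+6 + z^+7 + z^+9) + (z^+2 + z^+3 + z^+10 + z^+11) * (z^+4 + z^+6 + z^+7 + z^+9)) * y - ((z + z^+5 + z^+8 + z^+12) * (z^+2 + z^+3 + z^+10 + z^+11) * (z^+4 + z^+6 + z^+7 + z^+9))); first by ring.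
  by rewrite e1 e2 e3.
have hz := inQz_z z.
have hy1 : inQz z (z + z^+5 + z^+8 + z^+12) by repeat first [apply: inQz_add | apply: inQz_opp | apply: inQz_mul | apply: inQz_exp | apply: inQz_int | exact: hz].
have hy2 : inQz z (z^+2 + z^+3 + z^+10 + z^+11) by repeat first [apply: inQz_add | apply: inQz_opp | apply: inQz_mul | apply: inQz_exp | apply: inQz_int | exact: hz].
have hy3 : inQz z (z^+4 + z^+6 + z^+7 + z^+9) by repeat first [apply: inQz_add | apply: inQz_opp | apply: inQz_mul | apply: inQz_exp | apply: inQz_int | exact: hz].
by move/eqP; rewrite !mulf_eq0 !subr_eq0 => /orP[/orP[]|] /eqP ->.
Qed.
Lemma transfer_horner (L : fieldExtType rat) (phi : {rmorphism L -> algC}) (q : {poly rat}) (x : L) :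
  (map_poly ratr q).[phi x] = phi ((map_poly (in_alg L) q).[x]).
Proof.
rewrite -horner_map -map_poly_comp; congr (_.[_]); apply: eq_map_poly => r /=.
by rewrite alg_num_field fmorph_rat.
Qed.

Lemma size_minCpoly_minPoly (L : fieldExtType rat) (phi : {rmorphism L -> algC}) (x : L) :
  size (minCpoly (phi x)) = size (minPoly 1 x).
Proof.
have [q [Dq mon_q] dv_q] := minCpolyP (phi x).
have [mq Dmq] : exists mq, minPoly 1 x = map_poly (in_alg L) mq.
  by apply/polyOver1P; apply: minPolyOver.
have q0 : q != 0 by apply: monic_neq0.
have mq0 : mq != 0.
  by apply: contraTneq (monic_minPoly 1 x) => mq0; rewrite Dmq mq0 map_poly0 monicE lead_coef0 eq_sym oner_eq0.
have h1 : (q %| mq)%R.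
  rewrite -dv_q; apply/rootP; rewrite transfer_horner -Dmq.
  by have /rootP -> := root_minPoly 1 x; rewrite rmorph0.
have h2 : (minPoly 1 x %| map_poly (in_alg L) q)%R.
  apply: minPoly_dvdp; first by apply/polyOver1P; exists q.
  apply/rootP; apply: (fmorph_inj phi); rewrite -transfer_horner rmorph0.
  by have := root_minCpoly (phi x); rewrite Dq => /rootP.
rewrite Dq size_map_poly; apply/eqP; rewrite eqn_leq; apply/andP; split.
  by rewrite Dmq size_map_poly; apply: dvdp_leq.
rewrite -(size_map_poly (in_alg L) q); apply: dvdp_leq => //.
by rewrite map_poly_eq0.
Qed.

Lemma exclusion n z a : n.-primitive_root z -> inQz z a -> size (minCpoly a) = 4%N ->
  (3 %| totient n)%N.
Proof.
move=> pz [q Da] sa.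
have [Qs [QsC [s1 Hs1 Hgen]]] := num_field_exists [:: z].
case: s1 Hs1 Hgen => [|z1 [|? ?]] //= [Hz1] Hgen.
rewrite adjoin_seq1 in Hgen.
pose al := (map_poly (in_alg Qs) q).[z1].
have Hal : QsC al = a by rewrite /al -transfer_horner Hz1 Da.
have d1 : \dim <<1; al>> = 3%N.
  have := size_minCpoly_minPoly _ QsC al; rewrite Hal sa => E.
  rewrite dim_Fadjoin dimv1 muln1. rewrite size_minPoly in E. by apply: succn_inj; rewrite -E.
have d2 : \dim (fullv : {vspace Qs}) = totient n.
  have := size_minCpoly_minPoly _ QsC z1; rewrite Hz1 (minCpoly_cyclotomic pz).
  rewrite size_cyclotomic => E.
  rewrite -Hgen dim_Fadjoin dimv1 muln1. rewrite size_minPoly in E. by apply: succn_inj; rewrite -E.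
rewrite -d1 -d2; apply: field_dimS; exact: subvf.
Qed.
Lemma sigma_conj (F : splittingFieldType rat)
    (iota : {rmorphism F -> algC}) (tau : gal_of (fullv : {vspace F})) :
  'Gal(fullv / 1%VS)%g = <[tau]>%g ->
  #[tau]%g = 6%N ->
  totally_imaginary F -> forall x, iota ((tau ^+ 3)%g x) = (iota x)^*.
Proof.
move=> HG Ho Hti.
have [nu0 Hnu] := restrict_aut_to_normal_num_field iota Num.Def.conjC.
have hK : kHom 1 fullv (linfun nu0).
  apply/kHomP; split.
    by move=> x y _ _; rewrite !lfunE /= rmorphM.
  by move=> x /vlineP[r ->]; rewrite lfunE /= linearZ rmorph1.
have [g gG Hg] := kHom_to_gal (K:=1%AS) (M:=fullv) (E:=fullv) (ltac:(by rewrite !subvf)) (normalFieldf 1) hK.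
have Kg : forall x, iota (g x) = (iota x)^*.
  by move=> x; rewrite -Hg ?memvf // lfunE /= Hnu.
have gg : (g * g)%g = 1%g.
  apply/eqP/gal_eqP => x _; rewrite galM ?memvf // gal_id.
  by apply: (fmorph_inj iota); rewrite !Kg conjCK.
have g1 : g != 1%g.
  apply/negP => /eqP g1; have [x /negP Hx] := Hti iota; apply: Hx.
  by rewrite CrealE -Kg g1 gal_id.
rewrite HG in gG; case/cycleP: gG => k Dg.
have Dg' : g = (tau ^+ ((k %% 6)%N))%g by rewrite -Ho expg_mod_order.
have hj : ((k %% 6)%N < 6)%N by rewrite ltn_mod.
move: Dg' hj; move: ((k %% 6)%N) => j Dj hj.
have hj2 : (6 %| j + j)%N by rewrite -Ho order_dvdn expgD -Dj gg.
have j3 : j = 3%N.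
  move: hj hj2 g1; rewrite Dj; clear Dj.
  case: j => [|[|[|[|[|[|j]]]]]] //=; by rewrite expg0 eqxx.
by move=> x; rewrite -j3 -Dj Kg.
Qed.

Lemma inQz_lin z a (e k : int) : inQz z (e%:~R * a + k%:~R) -> e * e = 1 -> inQz z a.
Proof.
move=> h ee.
have -> : a = e%:~R * ((e%:~R * a + k%:~R) + (- k)%:~R).
  by rewrite rmorphN /= addrK mulrA -intrM ee mul1r.
by apply: inQz_mul; [exact: inQz_int | apply: inQz_add; [exact: h | exact: inQz_int]].
Qed.

Lemma sqr_real_ge0 (x : algC) : x \is Num.real -> 0 <= x ^+ 2.
Proof. by move=> r; rewrite -real_normK // exprn_ge0. Qed.


Lemma to_enum (S1 S2 S3 D : int) :
  (S1^+2 - 2 * S2 <= 10)%R -> (0 <= 2 * (S1^+2 - 3 * S2))%R -> (S3^+2 <= 1000)%R ->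
  D * D = 18 * S1 * S2 * S3 - 4 * (S1 * S1 * S1) * S3 + (S1 * S1) * (S2 * S2) - 4 * (S2 * S2 * S2) - 27 * (S3 * S3) ->
  D != 0 ->
  (forall r : int, r * r * r - S1 * (r * r) + S2 * r - S3 != 0) ->
  (S1 = (-4 : int) /\ S2 = (3 : int) /\ S3 = (1 : int)) \/
  (S1 = (-3 : int) /\ S2 = (0 : int) /\ S3 = (1 : int)) \/
  (S1 = (-3 : int) /\ S2 = (0 : int) /\ S3 = (3 : int)) \/
  (S1 = (-2 : int) /\ S2 = (-3 : int) /\ S3 = (5 : int)) \/
  (S1 = (-2 : int) /\ S2 = (-1 : int) /\ S3 = (1 : int)) \/
  (S1 = (-1 : int) /\ S2 = (-4 : int) /\ S3 = (-1 : int)) \/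
  (S1 = (-1 : int) /\ S2 = (-2 : int) /\ S3 = (1 : int)) \/
  (S1 = (0 : int) /\ S2 = (-3 : int) /\ S3 = (-1 : int)) \/
  (S1 = (0 : int) /\ S2 = (-3 : int) /\ S3 = (1 : int)) \/
  (S1 = (1 : int) /\ S2 = (-4 : int) /\ S3 = (1 : int)) \/
  (S1 = (1 : int) /\ S2 = (-2 : int) /\ S3 = (-1 : int)) \/
  (S1 = (2 : int) /\ S2 = (-3 : int) /\ S3 = (-5 : int)) \/
  (S1 = (2 : int) /\ S2 = (-1 : int) /\ S3 = (-1 : int)) \/
  (S1 = (3 : int) /\ S2 = (0 : int) /\ S3 = (-3 : int)) \/
  (S1 = (3 : int) /\ S2 = (0 : int) /\ S3 = (-1 : int)) \/
  (S1 = (4 : int) /\ S2 = (3 : int) /\ S3 = (-1 : int)).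
Proof.
move=> h1 h2 h3 h4 h5 h6.
have H4 : (Z_of_int D * Z_of_int D = EZ.discZ (Z_of_int S1) (Z_of_int S2) (Z_of_int S3))%Z.
  clear -h4; rewrite /EZ.discZ; lia.
have H6 : forall r, EZ.cubZ (Z_of_int S1) (Z_of_int S2) (Z_of_int S3) r <> 0%Z.
  move=> r; have := h6 (int_of_Z r); clear -h6; rewrite /EZ.cubZ; lia.
have H1 : (Z_of_int S1 ^ 2 - 2 * Z_of_int S2 <= 10)%Z by clear -h1; lia.
have H2 : (3 * Z_of_int S2 <= Z_of_int S1 ^ 2)%Z by clear -h2; lia.
have H3 : (Z_of_int S3 ^ 2 <= 1000)%Z by clear -h3; lia.
have H5 : Z_of_int D <> 0%Z by clear -h5; lia.
have E := EZ.enumZ _ _ _ _ H1 H2 H3 H4 H5 H6.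
clear -E; move: E; rewrite /EZ.goodL /=.
case=> [E|[E|[E|[E|[E|[E|[E|[E|[E|[E|[E|[E|[E|[E|[E|[E|[]]]]]]]]]]]]]]]]].
all: case: E => E1 E2 E3.
  left; split; [|split]; lia.
  right; left; split; [|split]; lia.
  right; right; left; split; [|split]; lia.
  right; right; right; left; split; [|split]; lia.
  right; right; right; right; left; split; [|split]; lia.
  right; right; right; right; right; left; split; [|split]; lia.
  right; right; right; right; right; right; left; split; [|split]; lia.
  right; right; right; right; right; right; right; left; split; [|split]; lia.
  right; right; right; right; right; right; right; right; left; split; [|split]; lia.
  right; right; right; right; right; right; right; right; right; left; split; [|split]; lia.
  right; right; right; right; right; right; right; right; right; right; left; split; [|split]; lia.
  right; right; right; right; right; right; right; right; right; right; right; left; split; [|split]; lia.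
  right; right; right; right; right; right; right; right; right; right; right; right; left; split; [|split]; lia.
  right; right; right; right; right; right; right; right; right; right; right; right; right; left; split; [|split]; lia.
  right; right; right; right; right; right; right; right; right; right; right; right; right; right; left; split; [|split]; lia.
  right; right; right; right; right; right; right; right; right; right; right; right; right; right; right; split; [|split]; lia.
Qed.

Lemma alg_enum (a0 a1 a2 : algC) :
  a0 \is Num.real -> a1 \is Num.real -> a2 \is Num.real ->
  a0 + a1 + a2 \in Num.int -> a0 * a1 + a0 * a2 + a1 * a2 \in Num.int -> a0 * a1 * a2 \in Num.int ->
  (a0 - a1) * (a1 - a2) * (a2 - a0) \in Num.int ->
  a0 != a1 -> a1 != a2 -> a2 != a0 ->
  a0 \notin Num.int -> a1 \notin Num.int -> a2 \notin Num.int ->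
  a0 ^+ 2 + a1 ^+ 2 + a2 ^+ 2 < 11%:R ->
  exists m, (m \in [:: 7; 9; 13])%N /\ exists z, m.-primitive_root z /\ inQz z a0.
Proof.
move=> r0 r1 r2 /intrP[S1 e1] /intrP[S2 e2] /intrP[S3 e3] /intrP[D eD] n01 n12 n20 z0 z1 z2 hs.
have P0 : a0^+3 - S1%:~R * a0^+2 + S2%:~R * a0 - S3%:~R = 0 by rewrite -e1 -e2 -e3; ring.
have Hsq : (S1^+2 - 2 * S2)%:~R = a0^+2 + a1^+2 + a2^+2 :> algC.
  by rewrite !(rmorphB, rmorphM, rmorphXn) /= -e1 -e2; ring.
have h1 : (S1^+2 - 2 * S2 < 11)%R.
  by rewrite -(ltr_int algC) Hsq.
have h1' : (S1^+2 - 2 * S2 <= 10)%R by rewrite -ltzD1.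
have h2 : (0 <= 2 * (S1^+2 - 3 * S2))%R.
  rewrite -(ler0z algC); have -> : (2 * (S1^+2 - 3 * S2))%:~R = (a0 - a1)^+2 + (a1 - a2)^+2 + (a2 - a0)^+2 :> algC.
    by rewrite !(rmorphB, rmorphM, rmorphXn) /= -e1 -e2; ring.
  by rewrite !addr_ge0 // sqr_real_ge0 // rpredB.
have hle : forall x y w : algC, 0 <= x -> 0 <= y -> 0 <= w -> x + y + w <= 10%:R -> x <= 10%:R.
  move=> x y w hx hy hw h; apply: le_trans h; rewrite -addrA lerDl; exact: addr_ge0.
have hsum : a0^+2 + a1^+2 + a2^+2 <= 10%:R by rewrite -Hsq; rewrite -(ler_int algC) in h1'.
have q0 := sqr_real_ge0 _ r0; have q1 := sqr_real_ge0 _ r1; have q2 := sqr_real_ge0 _ r2.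
have b0 : a0^+2 <= 10%:R by apply: (hle _ _ _ q0 q1 q2 hsum).
have b1 : a1^+2 <= 10%:R.
  apply: (hle _ _ _ q1 q0 q2); have -> : a1^+2 + a0^+2 + a2^+2 = a0^+2 + a1^+2 + a2^+2 by ring.
  exact: hsum.
have b2 : a2^+2 <= 10%:R.
  apply: (hle _ _ _ q2 q0 q1); have -> : a2^+2 + a0^+2 + a1^+2 = a0^+2 + a1^+2 + a2^+2 by ring.
  exact: hsum.
have h3 : (S3^+2 <= 1000)%R.
  rewrite -(ler_int algC) rmorphXn /= -e3.
  have -> : (a0 * a1 * a2)^+2 = a0^+2 * a1^+2 * a2^+2 by ring.
  have -> : (1000%:~R : algC) = 10%:R * 10%:R * 10%:R by rewrite -!natrM.
  by rewrite !ler_pM // mulr_ge0.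
have h4 : D * D = 18 * S1 * S2 * S3 - 4 * (S1 * S1 * S1) * S3 + (S1 * S1) * (S2 * S2) - 4 * (S2 * S2 * S2) - 27 * (S3 * S3).
  apply: (@intr_inj algC); rewrite !(rmorphB, rmorphD, rmorphM) /= -eD -e1 -e2 -e3; ring.
have h5 : D != 0.
  by rewrite -(intr_eq0 algC) -eD !mulf_neq0 // subr_eq0 // eq_sym.
have h6 : forall r : int, r * r * r - S1 * (r * r) + S2 * r - S3 != 0.
  move=> r; rewrite -(intr_eq0 algC).
  have -> : (r * r * r - S1 * (r * r) + S2 * r - S3)%:~R = (r%:~R - a0) * (r%:~R - a1) * (r%:~R - a2) :> algC.
    by rewrite !(rmorphB, rmorphD, rmorphM) /= -e1 -e2 -e3; ring.
  have hr := intr_int algC r.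
  have ne : forall x : algC, x \notin Num.int -> r%:~R - x != 0.
    by move=> x hx; rewrite subr_eq0; apply: contraNneq hx => <-.
  by rewrite !mulf_neq0 ?ne.
have H := @to_enum S1 S2 S3 D h1' h2 h3 h4 h5 h6.
clear -H P0.
case: H => [[hS1 [hS2 hS3]]|[[hS1 [hS2 hS3]]|[[hS1 [hS2 hS3]]|[[hS1 [hS2 hS3]]|[[hS1 [hS2 hS3]]|[[hS1 [hS2 hS3]]|[[hS1 [hS2 hS3]]|[[hS1 [hS2 hS3]]|[[hS1 [hS2 hS3]]|[[hS1 [hS2 hS3]]|[[hS1 [hS2 hS3]]|[[hS1 [hS2 hS3]]|[[hS1 [hS2 hS3]]|[[hS1 [hS2 hS3]]|[[hS1 [hS2 hS3]]|[hS1 [hS2 hS3]]]]]]]]]]]]]]]]].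
  - rewrite hS1 hS2 hS3 in P0.
    have [z [pz hz]] := base7 ((1)%:~R * a0 + (1)%:~R) (ltac:(transitivity ((1)%:~R * (a0 ^+ 3 - (-4)%:~R * a0 ^+ 2 + (3)%:~R * a0 - (1)%:~R)); [ring | by rewrite P0 mulr0])).
    exists 7%N; split; first by [].
    by exists z; split; [exact: pz | apply: (@inQz_lin z a0 (1) (1) hz)].
  - rewrite hS1 hS2 hS3 in P0.
    have [z [pz hz]] := base9 ((1)%:~R * a0 + (1)%:~R) (ltac:(transitivity ((1)%:~R * (a0 ^+ 3 - (-3)%:~R * a0 ^+ 2 + (0)%:~R * a0 - (1)%:~R)); [ring | by rewrite P0 mulr0])).
    exists 9%N; split; first by [].
    by exists z; split; [exact: pz | apply: (@inQz_lin z a0 (1) (1) hz)].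
  - rewrite hS1 hS2 hS3 in P0.
    have [z [pz hz]] := base9 ((-1)%:~R * a0 + (-1)%:~R) (ltac:(transitivity ((-1)%:~R * (a0 ^+ 3 - (-3)%:~R * a0 ^+ 2 + (0)%:~R * a0 - (3)%:~R)); [ring | by rewrite P0 mulr0])).
    exists 9%N; split; first by [].
    by exists z; split; [exact: pz | apply: (@inQz_lin z a0 (-1) (-1) hz)].
  - rewrite hS1 hS2 hS3 in P0.
    have [z [pz hz]] := base13 ((-1)%:~R * a0 + (-1)%:~R) (ltac:(transitivity ((-1)%:~R * (a0 ^+ 3 - (-2)%:~R * a0 ^+ 2 + (-3)%:~R * a0 - (5)%:~R)); [ring | by rewrite P0 mulr0])).
    exists 13%N; split; first by [].
    by exists z; split; [exact: pz | apply: (@inQz_lin z a0 (-1) (-1) hz)].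
  - rewrite hS1 hS2 hS3 in P0.
    have [z [pz hz]] := base7 ((-1)%:~R * a0 + (-1)%:~R) (ltac:(transitivity ((-1)%:~R * (a0 ^+ 3 - (-2)%:~R * a0 ^+ 2 + (-1)%:~R * a0 - (1)%:~R)); [ring | by rewrite P0 mulr0])).
    exists 7%N; split; first by [].
    by exists z; split; [exact: pz | apply: (@inQz_lin z a0 (-1) (-1) hz)].
  - rewrite hS1 hS2 hS3 in P0.
    have [z [pz hz]] := base13 ((1)%:~R * a0 + (0)%:~R) (ltac:(transitivity ((1)%:~R * (a0 ^+ 3 - (-1)%:~R * a0 ^+ 2 + (-4)%:~R * a0 - (-1)%:~R)); [ring | by rewrite P0 mulr0])).
    exists 13%N; split; first by [].
    by exists z; split; [exact: pz | apply: (@inQz_lin z a0 (1) (0) hz)].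
  - rewrite hS1 hS2 hS3 in P0.
    have [z [pz hz]] := base7 ((1)%:~R * a0 + (0)%:~R) (ltac:(transitivity ((1)%:~R * (a0 ^+ 3 - (-1)%:~R * a0 ^+ 2 + (-2)%:~R * a0 - (1)%:~R)); [ring | by rewrite P0 mulr0])).
    exists 7%N; split; first by [].
    by exists z; split; [exact: pz | apply: (@inQz_lin z a0 (1) (0) hz)].
  - rewrite hS1 hS2 hS3 in P0.
    have [z [pz hz]] := base9 ((1)%:~R * a0 + (0)%:~R) (ltac:(transitivity ((1)%:~R * (a0 ^+ 3 - (0)%:~R * a0 ^+ 2 + (-3)%:~R * a0 - (-1)%:~R)); [ring | by rewrite P0 mulr0])).
    exists 9%N; split; first by [].
    by exists z; split; [exact: pz | apply: (@inQz_lin z a0 (1) (0) hz)].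
  - rewrite hS1 hS2 hS3 in P0.
    have [z [pz hz]] := base9 ((-1)%:~R * a0 + (0)%:~R) (ltac:(transitivity ((-1)%:~R * (a0 ^+ 3 - (0)%:~R * a0 ^+ 2 + (-3)%:~R * a0 - (1)%:~R)); [ring | by rewrite P0 mulr0])).
    exists 9%N; split; first by [].
    by exists z; split; [exact: pz | apply: (@inQz_lin z a0 (-1) (0) hz)].
  - rewrite hS1 hS2 hS3 in P0.
    have [z [pz hz]] := base13 ((-1)%:~R * a0 + (0)%:~R) (ltac:(transitivity ((-1)%:~R * (a0 ^+ 3 - (1)%:~R * a0 ^+ 2 + (-4)%:~R * a0 - (1)%:~R)); [ring | by rewrite P0 mulr0])).
    exists 13%N; split; first by [].
    by exists z; split; [exact: pz | apply: (@inQz_lin z a0 (-1) (0) hz)].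
  - rewrite hS1 hS2 hS3 in P0.
    have [z [pz hz]] := base7 ((-1)%:~R * a0 + (0)%:~R) (ltac:(transitivity ((-1)%:~R * (a0 ^+ 3 - (1)%:~R * a0 ^+ 2 + (-2)%:~R * a0 - (-1)%:~R)); [ring | by rewrite P0 mulr0])).
    exists 7%N; split; first by [].
    by exists z; split; [exact: pz | apply: (@inQz_lin z a0 (-1) (0) hz)].
  - rewrite hS1 hS2 hS3 in P0.
    have [z [pz hz]] := base13 ((1)%:~R * a0 + (-1)%:~R) (ltac:(transitivity ((1)%:~R * (a0 ^+ 3 - (2)%:~R * a0 ^+ 2 + (-3)%:~R * a0 - (-5)%:~R)); [ring | by rewrite P0 mulr0])).
    exists 13%N; split; first by [].
    by exists z; split; [exact: pz | apply: (@inQz_lin z a0 (1) (-1) hz)].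
  - rewrite hS1 hS2 hS3 in P0.
    have [z [pz hz]] := base7 ((1)%:~R * a0 + (-1)%:~R) (ltac:(transitivity ((1)%:~R * (a0 ^+ 3 - (2)%:~R * a0 ^+ 2 + (-1)%:~R * a0 - (-1)%:~R)); [ring | by rewrite P0 mulr0])).
    exists 7%N; split; first by [].
    by exists z; split; [exact: pz | apply: (@inQz_lin z a0 (1) (-1) hz)].
  - rewrite hS1 hS2 hS3 in P0.
    have [z [pz hz]] := base9 ((1)%:~R * a0 + (-1)%:~R) (ltac:(transitivity ((1)%:~R * (a0 ^+ 3 - (3)%:~R * a0 ^+ 2 + (0)%:~R * a0 - (-3)%:~R)); [ring | by rewrite P0 mulr0])).
    exists 9%N; split; first by [].
    by exists z; split; [exact: pz | apply: (@inQz_lin z a0 (1) (-1) hz)].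
  - rewrite hS1 hS2 hS3 in P0.
    have [z [pz hz]] := base9 ((-1)%:~R * a0 + (1)%:~R) (ltac:(transitivity ((-1)%:~R * (a0 ^+ 3 - (3)%:~R * a0 ^+ 2 + (0)%:~R * a0 - (-1)%:~R)); [ring | by rewrite P0 mulr0])).
    exists 9%N; split; first by [].
    by exists z; split; [exact: pz | apply: (@inQz_lin z a0 (-1) (1) hz)].
  - rewrite hS1 hS2 hS3 in P0.
    have [z [pz hz]] := base7 ((-1)%:~R * a0 + (1)%:~R) (ltac:(transitivity ((-1)%:~R * (a0 ^+ 3 - (4)%:~R * a0 ^+ 2 + (3)%:~R * a0 - (-1)%:~R)); [ring | by rewrite P0 mulr0])).
    exists 7%N; split; first by [].
    by exists z; split; [exact: pz | apply: (@inQz_lin z a0 (-1) (1) hz)].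
Qed.

Lemma gal_horner (F : splittingFieldType rat) (g : gal_of (fullv : {vspace F})) (q : {poly rat}) (x : F) :
  g ((map_poly (in_alg F) q).[x]) = (map_poly (in_alg F) q).[g x].
Proof.
rewrite -horner_map /= -map_poly_comp; congr (_.[_]); apply: eq_map_poly => r /=.
by rewrite linearZ rmorph1.
Qed.

Lemma aint_gal (F : splittingFieldType rat) (iota : {rmorphism F -> algC})
   (g : gal_of (fullv : {vspace F})) (x : F) :
  iota x \in Aint -> iota (g x) \in Aint.
Proof.
move=> hx; have [q [Dq mq] dv] := minCpolyP (iota x).
have r0 : (map_poly (in_alg F) q).[x] = 0.
  apply: (fmorph_inj iota); rewrite rmorph0 -transfer_horner -Dq.
  exact/rootP/root_minCpoly.
apply: (@root_monic_Aint (minCpoly (iota x))); last exact: hx.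
  by rewrite Dq; apply/rootP; rewrite transfer_horner -gal_horner r0 rmorph0 rmorph0.
exact: minCpoly_monic.
Qed.

Lemma galois_part (F : splittingFieldType rat)
    (iota : {rmorphism F -> algC}) (tau : gal_of (fullv : {vspace F})) (f : F) :
  'Gal(fullv / 1%VS)%g = <[tau]>%g ->
  #[tau]%g = 6%N ->
  totally_imaginary F ->
  iota f \is Num.real -> iota f \in Aint -> iota f \notin Num.int ->
  2 * (\sum_(i < 3) `|iota ((tau ^+ i)%g f)| ^+ 2) < 22 ->
  [/\ exists m, (m \in [:: 7; 9; 13])%N /\ exists z, m.-primitive_root z /\ inQz z (iota f),
      size (minCpoly (iota f)) = 4%N &
      forall x, real_image iota x -> exists h : {poly rat}, x = (map_poly ratr h).[iota f]].
Proof.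
move=> HG Ho Hti fR fA fZ fN.
have Ks := sigma_conj F iota tau HG Ho Hti.
have G1 : galois 1 (fullv : {vspace F}).
  apply/and3P; split; [exact: subvf | | exact: normalFieldf].
  apply/separableP => y _; apply: pcharf0_separable => n.
  by rewrite pchar_lalg pchar_num.
have tauS : forall n x, (tau ^+ n.+1)%g x = tau ((tau ^+ n)%g x).
  by move=> n x; rewrite expgSr galM ?memvf.
have fixQ : forall w, tau w = w -> exists r : rat, w = r%:A.
  move=> w tw.
  have hall : forall n, (tau ^+ n)%g w = w.
    by elim=> [|n IH]; [rewrite expg0 gal_id | rewrite tauS IH].
  have : w \in fixedField 'Gal(fullv / 1%VS)%g.
    apply/fixedFieldP; first exact: memvf.
    by move=> g; rewrite HG => /cycleP[n ->]; exact: hall.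
  have /galois_fixedField -> := G1.
  by case/vlineP=> r ->; exists r.
have iota_alg : forall r : rat, iota (r%:A) = ratr r.
  by move=> r; rewrite alg_num_field fmorph_rat.
have fnot : tau f != f.
  apply/negP => /eqP /fixQ [r Er]; move: fZ; rewrite Er iota_alg => /negP; apply.
  by apply: Cint_rat_Aint; [exact: Crat_rat | rewrite -iota_alg -Er].
have sf : (tau ^+ 3)%g f = f.
  by apply: (fmorph_inj iota); rewrite Ks; move: fR; rewrite CrealE => /eqP.
have [f1 Hf1] : {f1 | tau f = f1} by exists (tau f).
have [f2 Hf2] : {f2 | tau f1 = f2} by exists (tau f1).
have Hf3 : tau f2 = f.
  by rewrite -sf -Hf2 -Hf1 !tauS expg0 gal_id.
have t0 : (tau ^+ 0)%g f = f by rewrite expg0 gal_id.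
have t1 : (tau ^+ 1)%g f = f1 by rewrite tauS t0.
have t2 : (tau ^+ 2)%g f = f2 by rewrite tauS t1.
have scomm : forall x, (tau ^+ 3)%g (tau x) = tau ((tau ^+ 3)%g x).
  move=> x; rewrite -galM ?memvf // -expgS -tauS //.
have rl : forall w, (tau ^+ 3)%g w = w -> iota w \is Num.real.
  by move=> w hw; rewrite CrealE -Ks hw.
have sf1 : (tau ^+ 3)%g f1 = f1 by rewrite -Hf1 scomm sf.
have sf2 : (tau ^+ 3)%g f2 = f2 by rewrite -Hf2 scomm sf1.
have r1 := rl _ sf1; have r2 := rl _ sf2.
have A1 : iota f1 \in Aint by rewrite -Hf1; exact: aint_gal.
have A2 : iota f2 \in Aint by rewrite -Hf2; exact: aint_gal.
have hsym : forall w, tau w = w -> iota w \in Aint -> iota w \in Num.int.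
  move=> w /fixQ [r ->] hA; apply: Cint_rat_Aint => //.
  by rewrite iota_alg Crat_rat.
have tD : forall x y, tau (x + y) = tau x + tau y by move=> x y; rewrite rmorphD.
have tM : forall x y, tau (x * y) = tau x * tau y by move=> x y; rewrite rmorphM.
have tB : forall x y, tau (x - y) = tau x - tau y by move=> x y; rewrite rmorphB.
have S1 : iota f + iota f1 + iota f2 \in Num.int.
  rewrite -!rmorphD; apply: hsym; last by rewrite !rmorphD !rpredD.
  by rewrite !tD Hf1 Hf2 Hf3; ring.
have S2 : iota f * iota f1 + iota f * iota f2 + iota f1 * iota f2 \in Num.int.
  rewrite -!rmorphM -!rmorphD; apply: hsym; last by rewrite !rmorphD !rmorphM !rpredD ?rpredM.
  by rewrite !tD !tM Hf1 Hf2 Hf3; ring.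
have S3 : iota f * iota f1 * iota f2 \in Num.int.
  rewrite -!rmorphM; apply: hsym; last by rewrite !rmorphM !rpredM.
  by rewrite !tM Hf1 Hf2 Hf3; ring.
have SD : (iota f - iota f1) * (iota f1 - iota f2) * (iota f2 - iota f) \in Num.int.
  rewrite -!rmorphB -!rmorphM; apply: hsym; last by rewrite !rmorphM !rmorphB !rpredM ?rpredB.
  by rewrite !tM !tB Hf1 Hf2 Hf3; ring.
have tinj : forall x y : F, tau x = tau y -> x = y by move=> x y; apply: fmorph_inj.
have n01 : iota f != iota f1.
  by apply: contra fnot => /eqP /(fmorph_inj iota) E; rewrite Hf1 E.
have n12 : iota f1 != iota f2.
  apply: contra fnot => /eqP /(fmorph_inj iota) E.
  by rewrite Hf1 (tinj _ _ (etrans Hf1 (etrans E (esym Hf2)))) .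
have n20 : iota f2 != iota f.
  apply: contra fnot => /eqP /(fmorph_inj iota) E.
  have E2 : f = f1 by rewrite -[in LHS]Hf3 -Hf1 E.
  by rewrite Hf1 E2.
have zi : forall w n, w = n%:~R -> iota w \in Num.int.
  by move=> w n ->; rewrite rmorph_int intr_int.
have z1 : iota f1 \notin Num.int.
  apply: contra fZ => /intrP[n En].
  have Ew : f1 = n%:~R by apply: (fmorph_inj iota); rewrite En rmorph_int.
  by apply: (zi _ n); rewrite -Hf3 -Hf2 Ew !rmorph_int.
have z2 : iota f2 \notin Num.int.
  apply: contra fZ => /intrP[n En].
  have Ew : f2 = n%:~R by apply: (fmorph_inj iota); rewrite En rmorph_int.
  by apply: (zi _ n); rewrite -Hf3 Ew !rmorph_int.
have hs : iota f ^+ 2 + iota f1 ^+ 2 + iota f2 ^+ 2 < 11%:R.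
  move: fN; rewrite (big_ord_recl 2) (big_ord_recl 1) (big_ord_recl 0) big_ord0 /=.
  rewrite /bump /= t0 t1 t2 !real_normK // addr0 addrA => h.
  have h2 : 2 * (iota f ^+ 2 + iota f1 ^+ 2 + iota f2 ^+ 2) < 2 * 11%:R.
    by rewrite -natrM.
  by rewrite ltr_pM2l in h2.
have s1 : (tau ^+ 3)%g != 1%g.
  apply/negP => /eqP s1; have [x /negP Hx] := Hti iota; apply: Hx.
  by rewrite CrealE -Ks s1 gal_id.
have powf : forall j, (j < 6)%N -> (tau ^+ j)%g f = f -> j = 0%N \/ j = 3%N.
  move=> j hj hf; move: hj hf.
  case: j => [|[|[|[|[|[|j]]]]]] // _; rewrite ?tauS t0 ?(Hf1, Hf2, Hf3) => E.
  - by left.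
  - by move: fnot; rewrite Hf1 E eqxx.
  - by move: n20; rewrite E eqxx.
  - by right.
  - by move: fnot; rewrite Hf1 E eqxx.
  - by move: n20; rewrite E eqxx.
have Hsub : forall g, g \in 'Gal(fullv / <<1; f>>)%g -> g = 1%g \/ g = (tau ^+ 3)%g.
  move=> g gG.
  have gf : g f = f by apply: (fixed_gal (subvf _) gG (memv_adjoin _ _)).
  have : g \in 'Gal(fullv / 1%VS)%g by apply: (subsetP (galS _ (sub1v <<1; f>>%AS))).
  rewrite HG => /cycleP[k Dk].
  have Dk' : g = (tau ^+ (k %% 6)%N)%g by rewrite -Ho expg_mod_order.
  have hk : ((k %% 6)%N < 6)%N by rewrite ltn_mod.
  have := powf (k %% 6)%N hk; rewrite -Dk' => /(_ gf).
  by case=> E; [left | right]; rewrite Dk' E ?expg0.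
have Hs : (tau ^+ 3)%g \in 'Gal(fullv / <<1; f>>)%g.
  rewrite gal_kHom ?subvf //; apply/kAHomP => y /Fadjoin_polyP[p /polyOver1P[q ->] ->].
  by rewrite gal_horner sf.
have Gset : 'Gal(fullv / <<1; f>>)%g = [set 1%g; (tau ^+ 3)%g].
  apply/setP => g; rewrite !inE; apply/idP/idP.
  - by move/Hsub => [->|->]; rewrite eqxx ?orbT.
  - by case/orP => /eqP ->; [exact: group1 | exact: Hs].
have d6 : \dim (fullv : {vspace F}) = 6%N.
  by have := galois_dim G1; rewrite HG dimv1 divn1 => ->.
have G2 : galois <<1; f>> fullv by apply: (galoisS _ G1); rewrite sub1v subvf.
have d2 : (\dim (fullv : {vspace F}) %/ \dim <<1; f>>)%N = 2%N.
  by rewrite (galois_dim G2) Gset cards2 eq_sym s1.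
have dd : (\dim <<1; f>> %| \dim (fullv : {vspace F}))%N by apply: field_dimS; exact: subvf.
have d3 : \dim <<1; f>> = 3%N.
  move/divnK: dd; rewrite d2 d6 => /eqP E.
  by apply/eqP; rewrite -(eqn_pmul2l (isT : (0 < 2)%N)); exact: E.
have sz : size (minCpoly (iota f)) = 4%N.
  rewrite size_minCpoly_minPoly size_minPoly.
  have := dim_Fadjoin 1 f; rewrite dimv1 muln1 d3 => E.
  by rewrite E.
have Hreal : forall x, real_image iota x -> exists h : {poly rat}, x = (map_poly ratr h).[iota f].
  move=> x [w [wR ->]].
  have sw : (tau ^+ 3)%g w = w.
    by apply: (fmorph_inj iota); rewrite Ks; move: wR; rewrite CrealE => /eqP.
  have : w \in fixedField 'Gal(fullv / <<1; f>>)%g.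
    apply/fixedFieldP; first exact: memvf.
    by move=> g /Hsub [->|->]; rewrite ?gal_id.
  have /galois_fixedField -> := G2.
  case/Fadjoin_polyP => p /polyOver1P[q ->] ->; exists q.
  by rewrite transfer_horner.
split => //.
exact: (alg_enum _ _ _ fR r1 r2 S1 S2 S3 SD n01 n12 n20 fZ z1 z2 hs).
Qed.

Lemma final_nat (p : nat) : (0 < p)%N -> (p <= 13)%N -> (3 %| totient p)%N -> p \in [:: 7; 9; 13]%N.
Proof. by case: p => [|[|[|[|[|[|[|[|[|[|[|[|[|[|p]]]]]]]]]]]]]]. Qed.

Theorem proposition3p5 (F : splittingFieldType rat)
    (iota : {rmorphism F -> algC}) (tau : gal_of (fullv : {vspace F})) (p : nat) :
  'Gal(fullv / 1%VS)%g = <[tau]>%g ->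
  #[tau]%g = 6%N ->
  totally_imaginary F ->
  is_conductor (real_image iota) p ->
  (exists f : F, [/\ iota f \is Num.real, iota f \in Aint, iota f \notin Num.int &
      2 * (\sum_(i < 3) `|iota ((tau ^+ i)%g f)| ^+ 2) < 22]) ->
  p \in [:: 7; 9; 13]%N.
Proof.
move=> HG Ho Hti [p0 [Hcyc Hmin]] [f [fR fA fZ fN]].
have [[m [hm [z [pz hz]]]] sz Hreal] := galois_part F iota tau f HG Ho Hti fR fA fZ fN.
have hm13 : (0 < m)%N && (m <= 13)%N by move: hm; rewrite !inE => /or3P[] /eqP ->.
case/andP: hm13 => m0 m13.
have hcm : in_cyclotomic (real_image iota) m.
  by exists z; split => // x /Hreal [h ->]; exact: inQz_comp.
have pm : (p <= m)%N by apply: Hmin.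
have [z' [pz' hz']] := Hcyc.
have ha : inQz z' (iota f) by apply: hz'; exists f; split.
have h3 := exclusion _ _ _ pz' ha sz.
apply: final_nat => //; exact: leq_trans pm m13.
Qed.
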